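(* Let $G_{\mathrm{syn}}$ be an admissible group w.r.t. a prefix $P=\forall x_1,\dots,x_n\,\exists y_1(D_1),\dots,y_k(D_k)$. For every $g\in G_{\mathrm{syn}}$, the function $\mathcal S(P)\to\mathcal S(P)$, $s\mapsto g(s)$, lies in the associated group of $G_{\mathrm{syn}}$.
   Context: $X=\{x_1,\dots,x_n\}$, $Y=\{y_1,\dots,y_k\}$ are finite disjoint sets of propositional variables; $\operatorname{BF}(V)$ the propositional formulas over $V\subseteq X\cup Y$; $\mathcal A(V)$ the assignments $V\to\{\top,\bot\}$; $[\phi]_\sigma$ the truth value. Dependency sets $D_j\subseteq X$. An interpretation is $s=(s_1,\dots,s_k)$ with $s_j:\{\top,\bot\}^{|D_j|}\to\{\top,\bot\}$; $\mathcal S(P)$ the set of interpretations. For $\sigma\in\mathcal A(X)$, $\sigma_s\in\mathcal A(X\cup Y)$ equals $\sigma$ on $X$ and $\sigma_s(y_j)=s_j$ evaluated at $\sigma$'s values on $D_j$. For $g:\operatorname{BF}(V)\to\operatorname{BF}(V)$ and $\rho\in\mathcal A(V)$, $g(\rho)(v)=[g(v)]_\rho$; $g$ preserves propositional satisfiability if $[g(\phi)]_\rho=[\phi]_{g(\rho)}$ always. A formula in $\operatorname{BF}(Y)$ depends on $x_i$ if it contains some $y_j$ with $x_i\in D_j$. A bijection $g$ of $\operatorname{BF}(X\cup Y)$ is admissible w.r.t. $P$ if it preserves propositional satisfiability, $g(x_i)\in\operatorname{BF}(X)$, $g(y_j)\in\operatorname{BF}(Y)$, and if $g(y_j)$ depends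 on $x_i$ then $g^{-1}(x_i)\in\operatorname{BF}(D_j)$. An admissible group is a subgroup of all admissible functions. For admissible $g$ and $\sigma\in\mathcal A(X)$, $g(\sigma)(x)=[g(x)]_\sigma$. For $g\in G_{\mathrm{syn}}$, $g(s)$ is the (well-defined) interpretation $t$ with $\sigma_t=g(g^{-1}(\sigma)_s)$ for all $\sigma\in\mathcal A(X)$. The associated group of $G_{\mathrm{syn}}$ is the set of all bijections $f:\mathcal S(P)\to\mathcal S(P)$ such that for every $s\in\mathcal S(P)$ and every $\sigma\in\mathcal A(X)$ there exists $g\in G_{\mathrm{syn}}$ with $g(\sigma)_{f(s)}=g(\sigma_s)$. *)

(* Defs.v *)
From mathcomp Require Import all_boot.
Set Implicit Arguments. Unset Strict Implicit. Unset Printing Implicit Defensive.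

Inductive form (V : Type) : Type :=
  | FVar of V
  | FTrue
  | FFalse
  | FNot of form V
  | FAnd of form V & form V
  | FOr of form V & form V.
Arguments FTrue {V}. Arguments FFalse {V}.

Fixpoint eval V (rho : V -> bool) (phi : form V) : bool :=
  match phi with
  | FVar v => rho v
  | FTrue => true
  | FFalse => false
  | FNot p => ~~ eval rho p
  | FAnd p q => eval rho p && eval rho q
  | FOr p q => eval rho p || eval rho q
  end.

Fixpoint fvars V (phi : form V) : seq V :=
  match phi with
  | FVar v => [:: v]
  | FTrue | FFalse => [::]
  | FNot p => fvars p
  | FAnd p q | FOr p q => fvars p ++ fvars q
  end.

(* Variables: X = {x_1..x_n} as inl 'I_n, Y = {y_1..y_k} as inr 'I_k. *)
Definition var (n k : nat) := ('I_n + 'I_k)%type.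
Definition fm (n k : nat) := form (var n k).

Definition inBF n k (A : var n k -> bool) (phi : fm n k) : bool := all A (fvars phi).

Definition isX n k (v : var n k) : bool := if v is inl _ then true else false.
Definition isY n k (v : var n k) : bool := if v is inr _ then true else false.
Definition inD n k (D : 'I_k -> {set 'I_n}) (j : 'I_k) (v : var n k) : bool :=
  if v is inl x then x \in D j else false.

Definition depends n k (D : 'I_k -> {set 'I_n}) (phi : fm n k) (i : 'I_n) : Prop :=
  exists l : 'I_k, (inr l \in fvars phi) /\ (i \in D l).

Definition asg n k := {ffun var n k -> bool}.

Definition act_asg n k (g : fm n k -> fm n k) (rho : asg n k) : asg n k :=
  [ffun v => eval rho (g (FVar v))].

Definition preserves_sat n k (g : fm n k -> fm n k) : Prop :=
  forall (phi : fm n k) (rho : asg n k), eval rho (g phi) = eval (act_asg g rho) phi.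

Definition admissible n k (D : 'I_k -> {set 'I_n}) (g : fm n k -> fm n k) : Prop :=
  [/\ bijective g,
      preserves_sat g,
      (forall i : 'I_n, inBF (@isX n k) (g (FVar (inl i)))),
      (forall j : 'I_k, inBF (@isY n k) (g (FVar (inr j)))) &
      (forall (j : 'I_k) (i : 'I_n), depends D (g (FVar (inr j))) i ->
         forall phi : fm n k, g phi = FVar (inl i) -> inBF (inD D j) phi)].

Definition admissible_group n k (D : 'I_k -> {set 'I_n})
    (G : (fm n k -> fm n k) -> Prop) : Prop :=
  [/\ (forall g, G g -> admissible D g),
      G (fun phi => phi),
      (forall g h, G g -> G h -> G (g \o h)) &
      (forall g, G g -> exists h, [/\ G h, cancel g h & cancel h g])].

Definition asgD n k (D : 'I_k -> {set 'I_n}) (j : 'I_k) :=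
  {ffun {x : 'I_n | x \in D j} -> bool}.
Definition interp n k (D : 'I_k -> {set 'I_n}) :=
  forall j : 'I_k, {ffun asgD D j -> bool}.

Definition restr n k (D : 'I_k -> {set 'I_n}) (j : 'I_k) (sigma : {ffun 'I_n -> bool})
  : asgD D j := [ffun x => sigma (val x)].

Definition ext_s n k (D : 'I_k -> {set 'I_n}) (sigma : {ffun 'I_n -> bool})
  (s : interp D) : asg n k :=
  [ffun v => match v with inl x => sigma x | inr j => s j (restr D j sigma) end].

(* g(sigma)(x) = [g(x)]_sigma for sigma ∈ A(X) (g(x) ∈ BF(X); Y-values are irrelevant) *)
Definition act_asgX n k (g : fm n k -> fm n k) (sigma : {ffun 'I_n -> bool})
  : {ffun 'I_n -> bool} :=
  [ffun x => eval (fun v : var n k => match v with inl y => sigma y | inr _ => false end)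
                  (g (FVar (inl x)))].

Definition extendD n k (D : 'I_k -> {set 'I_n}) (j : 'I_k) (a : asgD D j)
  : {ffun 'I_n -> bool} :=
  [ffun x => if @insub _ (fun x => x \in D j) {x : 'I_n | x \in D j} x is Some y
             then a y else false].

(* g(s) : the interpretation t with sigma_t = g(g^{-1}(sigma)_s);
   t_j at an assignment a of D_j is the y_j-value of g(g^{-1}(sigma)_s)
   for sigma any extension of a (well-definedness is claimed in the paper). *)
Definition act_interp n k (D : 'I_k -> {set 'I_n}) (g ginv : fm n k -> fm n k)
  (s : interp D) : interp D :=
  fun j => [ffun a => act_asg g (ext_s (act_asgX ginv (extendD a)) s) (inr j)].

Definition in_assoc_group n k (D : 'I_k -> {set 'I_n})
    (G : (fm n k -> fm n k) -> Prop) (f : interp D -> interp D) : Prop :=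
  bijective f /\
  forall (s : interp D) (sigma : {ffun 'I_n -> bool}),
    exists h, G h /\ ext_s (act_asgX h sigma) (f s) = act_asg h (ext_s sigma s).

(* Main.v *)
Require Import Defs.
From mathcomp Require Import all_boot.
From Stdlib Require Import FunctionalExtensionality.
From Stdlib Require List.
Set Implicit Arguments.

Lemma eval_ext V (r1 r2 : V -> bool) (phi : form V) :
  (forall v, List.In v (fvars phi) -> r1 v = r2 v) -> eval r1 phi = eval r2 phi.
Proof.
elim: phi => //= [v|p IH|p IHp q IHq|p IHp q IHq] H.
- by apply: H; left.
- by rewrite IH.
- rewrite IHp ?IHq // => v Hv; apply: H; apply: List.in_or_app; tauto.
- rewrite IHp ?IHq // => v Hv; apply: H; apply: List.in_or_app; tauto.
Qed.

Lemma in_all (T : eqType) (P : pred T) (s : seq T) v : all P s -> List.In v s -> P v.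
Proof.
elim: s => //= a s IH /andP[Pa Ps] [<-|H]; [exact: Pa | exact: IH].
Qed.

Arguments in_all {T P s v}.

Lemma In_inE (T : eqType) (s : seq T) v : List.In v s -> v \in s.
Proof. elim: s => //= a s IH [->|H]; rewrite in_cons ?eqxx //; apply/orP; right; exact: IH. Qed.

Section Key.
Variables (n k : nat) (D : 'I_k -> {set 'I_n}) (g g' : fm n k -> fm n k).
Hypothesis adm : admissible D g.
Hypothesis gK' : cancel g' g.

Lemma L1 (sigma : {ffun 'I_n -> bool}) (rho : asg n k) x :
  (forall y, rho (inl y) = sigma y) ->
  act_asgX g sigma x = eval rho (g (FVar (inl x))).
Proof.
case: adm => _ _ hX _ _ Hr; rewrite ffunE; apply: eval_ext => v Hv.
have := in_all (hX x) Hv; case: v Hv => //= y _ _; by rewrite Hr.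
Qed.

Lemma L2 (rho : asg n k) v : eval (act_asg g rho) (g' (FVar v)) = rho v.
Proof. case: adm => _ ps _ _ _. by rewrite -ps gK'. Qed.

Lemma key (sigma : {ffun 'I_n -> bool}) (s : interp D) :
  ext_s (act_asgX g sigma) (act_interp g g' s) = act_asg g (ext_s sigma s).
Proof.
case: (adm) => _ ps hX hY hdep.
apply/ffunP => -[x|j]; rewrite !ffunE.
  apply: eval_ext => v Hv; have := in_all (hX x) Hv; case: v Hv => //= y _ _; by rewrite /ext_s ffunE.
apply: eval_ext => v Hv.
have := in_all (hY j) Hv; case: v Hv => //= l Hl _; rewrite /ext_s !ffunE.
congr (s l _); apply/ffunP => x; rewrite /restr !ffunE.
case: x => i Hi /=.
have dep : depends D (g (FVar (inr j))) i by exists l; split => //; exact: In_inE.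
have := hdep j i dep (g' (FVar (inl i))) (gK' _) => Hbf.
have -> : sigma i = ext_s sigma s (inl i) by rewrite /ext_s ffunE.
rewrite -(L2 (ext_s sigma s) (inl i)).
apply: eval_ext => u Hu.
have := in_all Hbf Hu; case: u Hu => //= x' _ Hx'.
rewrite /extendD ffunE insubT /= ffunE /act_asg ffunE.
rewrite ffunE /=; apply: eval_ext => v Hv; have := in_all (hX x') Hv; case: v Hv => //= y _ _; by rewrite /ext_s ffunE.
Qed.
End Key.

Lemma canc n k (D : 'I_k -> {set 'I_n}) (g g' : fm n k -> fm n k) :
  admissible D g -> admissible D g' -> cancel g g' -> cancel g' g ->
  cancel (act_interp (D:=D) g g') (act_interp (D:=D) g' g).
Proof.
move=> ag ag' gK gK' s.
apply: functional_extensionality_dep => j; apply/ffunP => a.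
set sigma := extendD a.
have e1 : act_asgX g' (act_asgX g sigma) = sigma.
  apply/ffunP => x.
  rewrite (@L1 _ _ _ g' ag' _ (act_asg g (ext_s sigma s))); last first.
    move=> y; rewrite ffunE; symmetry; apply: (L1 ag) => z; by rewrite ffunE.
  by rewrite (L2 ag gK') ffunE.
have e2 : restr D j sigma = a.
  by apply/ffunP => y; rewrite !ffunE valK.
have := congr1 (fun f : asg n k => f (inr j)) (key ag' gK (act_asgX g sigma) (act_interp g g' s)).
rewrite e1 (key ag gK') /ext_s ffunE e2 => ->.
by rewrite /act_asg ffunE (L2 ag gK') ffunE e2.
Qed.

Theorem lemma4 (n k : nat) (D : 'I_k -> {set 'I_n}) (G : (fm n k -> fm n k) -> Prop)
    (g ginv : fm n k -> fm n k) :
  admissible_group D G -> G g -> cancel g ginv -> cancel ginv g ->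
  @in_assoc_group n k D G (@act_interp n k D g ginv).
Proof.
move=> [Gadm Gid Gcomp Ginv] Gg gK gK'.
have [h [Gh hK hK']] := Ginv g Gg.
have eh : ginv = h.
  apply: functional_extensionality => phi.
  by rewrite -{1}(hK' phi) gK.
have ag := Gadm g Gg.
have ah : admissible D ginv by rewrite eh; exact: Gadm.
split.
  exists (act_interp ginv g); exact: canc.
move=> s sigma; exists g; split => //.
exact: key.
Qed.
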